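(* Let $\mathcal{X}$ be a family of subsets of $[d]$ such that at least one $\mathcal{X}$-matroid exists, and suppose the refinement procedure reaches the stationary function $v_{\mathcal{X}}$. If $v_{\mathcal{X}}$ is submodular, then $v_{\mathcal{X}}$ is the rank function of an $\mathcal{X}$-matroid, and this $\mathcal{X}$-matroid is the unique minimal $\mathcal{X}$-matroid with respect to the dependency order.
   Context: An $\mathcal{X}$-matroid is a matroid on $[d]$ in which every member of $\mathcal{X}$ is a circuit. Dependency order: $N_1\le N_2$ iff every dependent set of $N_1$ is dependent in $N_2$. A proper $\mathcal{X}$-sequence is a sequence $\mathcal{S}=(X_1,\dots,X_k)$ ($k\ge0$) of members of $\mathcal{X}$ with $X_i\not\subseteq\bigcup_{j<i}X_j$ for $i\ge2$; for $F\subseteq[d]$, $\mathrm{val}(F,\mathcal{S})=|F\cup\bigcup_{i=1}^kX_i|-k$ and $\mathrm{val}_{\mathcal{X}}(F)=\min_{\mathcal{S}}\mathrm{val}(F,\mathcal{S})$. Refinement procedure: $\mathrm{val}^1_{\mathcal{X}}=\mathrm{val}_{\mathcal{X}}$, and $\mathrm{val}^{n+1}_{\mathcal{X}}$ is obtained from $\mathrm{val}^n_{\mathcal{X}}$ by the first applicable rule: (i) if there are $A,B\subseteq[d]$, $x\in\mathcal{X}$ with $A\cap B\subseteq x$ and $\mathrm{val}^n(A\cup B)>\mathrm{val}^n(A)+\mathrm{val}^n(B)-\min\{|A\cap B|,|x|-1\}$, for one such choice lower $\mathrm{val}^{n+1}(A\cup B)$ to the right-hand side; (ii) else if there are $A\subsetneq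 B$ with $\mathrm{val}^n(A)>\mathrm{val}^n(B)$, for one such choice set $\mathrm{val}^{n+1}(A)=\mathrm{val}^n(B)$; (iii) else if there are $B\subsetneq A$ with $\mathrm{val}^n(A)>\mathrm{val}^n(B)+|A\setminus B|$, for one such choice set $\mathrm{val}^{n+1}(A)=\mathrm{val}^n(B)+|A\setminus B|$; (iv) else $\mathrm{val}^{n+1}=\mathrm{val}^n$; all other values unchanged. The stationary function is $v_{\mathcal{X}}$ (independent of the choices). A function $f:2^{[d]}\to\mathbb{Z}$ is submodular if $f(A\cup B)+f(A\cap B)\le f(A)+f(B)$ for all $A,B$. *)

(* Defs.v *)
From mathcomp Require Import all_boot all_order all_algebra.
Set Implicit Arguments. Unset Strict Implicit. Unset Printing Implicit Defensive.
Import Order.TTheory GRing.Theory Num.Theory.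
Local Open Scope ring_scope.

Section Defs.
Variable d : nat.
Local Notation E := ('I_d).

Definition is_matroid (M : {set {set E}}) : Prop :=
  [/\ set0 \in M,
      (forall I J : {set E}, J \in M -> I \subset J -> I \in M) &
      (forall I J : {set E}, I \in M -> J \in M -> (#|I| < #|J|)%N ->
         exists2 e, e \in J :\: I & e |: I \in M)].

Definition is_circuit (M : {set {set E}}) (C : {set E}) : Prop :=
  C \notin M /\ (forall D : {set E}, D \proper C -> D \in M).

Definition is_X_matroid (X : {set {set E}}) (M : {set {set E}}) : Prop :=
  is_matroid M /\ (forall x, x \in X -> is_circuit M x).

Definition mrank (M : {set {set E}}) (A : {set E}) : nat :=
  \max_(I in M | I \subset A) #|I|.

Definition dep_le (N1 N2 : {set {set E}}) : Prop :=
  forall A : {set E}, A \notin N1 -> A \notin N2.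

Definition proper_seq (X : {set {set E}}) (s : seq {set E}) : Prop :=
  (forall i, (i < size s)%N -> nth set0 s i \in X) /\
  (forall i, (1 <= i)%N -> (i < size s)%N ->
     ~~ (nth set0 s i \subset \bigcup_(j < i) nth set0 s j)).

Definition val_seq (F : {set E}) (s : seq {set E}) : int :=
  (#|F :|: \bigcup_(Y <- s) Y|)%:Z - (size s)%:Z.

Definition is_val_X (X : {set {set E}}) (f : {set E} -> int) : Prop :=
  forall F : {set E},
    (exists2 s, proper_seq X s & f F = val_seq F s) /\
    (forall s, proper_seq X s -> f F <= val_seq F s).

Definition upd (f : {set E} -> int) (S : {set E}) (v : int) : {set E} -> int :=
  fun T => if T == S then v else f T.

Definition rule_i_app (X : {set {set E}}) (f : {set E} -> int) (A B x : {set E}) : Prop :=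
  [/\ x \in X, A :&: B \subset x &
      f (A :|: B) > f A + f B - Num.min (#|A :&: B|%:Z) (#|x|%:Z - 1)].

Definition rule_ii_app (f : {set E} -> int) (A B : {set E}) : Prop :=
  A \proper B /\ f A > f B.

Definition rule_iii_app (f : {set E} -> int) (A B : {set E}) : Prop :=
  B \proper A /\ f A > f B + (#|A :\: B|)%:Z.

(* one step of the refinement procedure: val^n = f  ~>  val^{n+1} = g *)
Definition refine_step (X : {set {set E}}) (f g : {set E} -> int) : Prop :=
  (exists A B x, rule_i_app X f A B x /\
     g = upd f (A :|: B) (f A + f B - Num.min (#|A :&: B|%:Z) (#|x|%:Z - 1)))
  \/ ((forall A B x, ~ rule_i_app X f A B x) /\
      exists A B, rule_ii_app f A B /\ g = upd f A (f B))
  \/ ((forall A B x, ~ rule_i_app X f A B x) /\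
      (forall A B, ~ rule_ii_app f A B) /\
      exists A B, rule_iii_app f A B /\ g = upd f A (f B + (#|A :\: B|)%:Z))
  \/ ((forall A B x, ~ rule_i_app X f A B x) /\
      (forall A B, ~ rule_ii_app f A B) /\
      (forall A B, ~ rule_iii_app f A B) /\ g = f).

Definition stationary (X : {set {set E}}) (f : {set E} -> int) : Prop :=
  (forall A B x, ~ rule_i_app X f A B x) /\
  (forall A B, ~ rule_ii_app f A B) /\
  (forall A B, ~ rule_iii_app f A B).

Definition submodular (f : {set E} -> int) : Prop :=
  forall A B : {set E}, f (A :|: B) + f (A :&: B) <= f A + f B.

End Defs.

(* Main.v *)
Require Import Defs.
From mathcomp Require Import all_boot all_order all_algebra zify.
Import Order.TTheory GRing.Theory Num.Theory.
Set Implicit Arguments. Unset Strict Implicit. Unset Printing Implicit Defensive.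
Local Open Scope ring_scope.

Section Mat.
Variable d : nat.
Local Notation E := ('I_d).
Variable N : {set {set E}}.
Hypothesis HN : is_matroid N.
Local Notation r := (mrank N).

Lemma mat0 : set0 \in N. Proof. by case: HN. Qed.
Lemma matD {I J : {set E}} : J \in N -> I \subset J -> I \in N.
Proof. by case: HN => _ H _; apply: H. Qed.
Lemma matX {I J : {set E}} : I \in N -> J \in N -> (#|I| < #|J|)%N ->
  exists2 e, e \in J :\: I & e |: I \in N.
Proof. by case: HN => _ _ H; apply: H. Qed.

Lemma rk_ge {A I : {set E}} : I \in N -> I \subset A -> (#|I| <= r A)%N.
Proof. by move=> h1 h2; apply: leq_bigmax_cond; rewrite h1 h2. Qed.

Lemma rk_le (A : {set E}) m : (forall I : {set E}, I \in N -> I \subset A -> (#|I| <= m)%N) -> (r A <= m)%N.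
Proof. by move=> H; apply/bigmax_leqP => I /andP[h1 h2]; apply: H. Qed.

Lemma rk_spec (A : {set E}) : exists I, [/\ I \in N, I \subset A & #|I| = r A].
Proof.
have P0 : (set0 \in N) && (set0 \subset A) by rewrite mat0 sub0set.
case: (@arg_maxnP _ set0 (fun I : {set E} => (I \in N) && (I \subset A)) (fun I : {set E} => #|I|) P0) => I /andP[h1 h2] Hmax.
exists I; split => //; apply/eqP; rewrite eqn_leq rk_ge //=.
by apply: rk_le => J j1 j2; apply: Hmax; rewrite j1 j2.
Qed.

Lemma rk_card (A : {set E}) : (r A <= #|A|)%N.
Proof. by apply: rk_le => I _ h; apply: subset_leq_card. Qed.

Lemma rk_indep (I : {set E}) : I \in N -> r I = #|I|.
Proof. by move=> h; apply/eqP; rewrite eqn_leq rk_card rk_ge. Qed.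

Lemma rk_mono (A B : {set E}) : A \subset B -> (r A <= r B)%N.
Proof.
move=> hAB; case: (rk_spec A) => I [h1 h2 <-]; apply: rk_ge => //.
exact: subset_trans hAB.
Qed.

Lemma rk_extend {I0 S : {set E}} : I0 \in N -> I0 \subset S ->
  exists I, [/\ I \in N, I0 \subset I, I \subset S & #|I| = r S].
Proof.
case: (rk_spec S) => J [j1 j2 j3].
move Hm: (r S - #|I0|)%N => m; elim: m I0 Hm => [|m IH] I0 Hm h1 h2.
  exists I0; split => //; apply/eqP; rewrite eqn_leq rk_ge //=.
  by move/eqP: Hm; rewrite subn_eq0.
have hlt : (#|I0| < #|J|)%N by lia.
case: (matX h1 j1 hlt) => e; rewrite inE => /andP[eI eJ] hN.
have hc : #|e |: I0| = (#|I0|).+1 by rewrite cardsU1 eI.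
have hS : e |: I0 \subset S.
  by rewrite subUset sub1set h2 andbT; apply: (subsetP j2).
case: (IH (e |: I0)) => //.
  by rewrite hc; lia.
move=> I [i1 i2 i3 i4]; exists I; split => //.
by apply: subset_trans i2; apply: subsetUr.
Qed.

Lemma rk_submod (A B : {set E}) : (r (A :|: B) + r (A :&: B) <= r A + r B)%N.
Proof.
case: (rk_spec (A :&: B)) => I0 [h1 h2 h3].
have h4 : I0 \subset A :|: B.
  apply: subset_trans h2 _; apply: subset_trans (subsetIl A B) _; exact: subsetUl.
case: (rk_extend h1 h4) => I [i1 i2 i3 i4].
have hA : (#|I :&: A| <= r A)%N by apply: rk_ge; [apply: matD i1 _; apply: subsetIl| apply: subsetIr].
have hB : (#|I :&: B| <= r B)%N by apply: rk_ge; [apply: matD i1 _; apply: subsetIl| apply: subsetIr].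
have hU : (I :&: A) :|: (I :&: B) = I by rewrite -setIUr; apply/setIidPl.
have hI : (#|I0| <= #|(I :&: A) :&: (I :&: B)|)%N.
  apply: subset_leq_card; rewrite setIACA setIid subsetI i2 /=. done.
have := cardsUI (I :&: A) (I :&: B); rewrite hU; lia.
Qed.

Lemma rk_diff (A B : {set E}) : B \subset A -> (r A <= r B + #|A :\: B|)%N.
Proof.
move=> hBA; have := rk_submod B (A :\: B).
have -> : B :|: (A :\: B) = A.
  apply/setP => y; rewrite !inE; have := subsetP hBA y.
  by case: (y \in B); case: (y \in A) => // ->.
have := rk_card (A :\: B); lia.
Qed.

Lemma circ_ne0 {x : {set E}} : is_circuit N x -> x != set0.
Proof. by case=> h _; apply: contraNneq h => ->; apply: mat0. Qed.

Lemma circ_rk {x : {set E}} : is_circuit N x -> (r x < #|x|)%N.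
Proof.
case=> hx _; case: (rk_spec x) => I [i1 i2 <-].
rewrite ltnNge; apply: contraNN hx => hc.
have /eqP <- : I == x by rewrite eqEcard i2 hc.
done.
Qed.

Lemma circ_rkD {x : {set E}} {e} : is_circuit N x -> e \in x -> r (x :\ e) = (#|x| - 1)%N.
Proof.
case=> hx hD he; rewrite rk_indep; last by apply: hD; apply: properD1.
by rewrite (cardsD1 e x) he; lia.
Qed.

Lemma circ_rk1 {x : {set E}} : is_circuit N x -> (#|x| - 1 <= r x)%N.
Proof.
move=> hc; case/set0Pn: (circ_ne0 hc) => e he.
by rewrite -(circ_rkD hc he); apply: rk_mono; apply: subsetDl.
Qed.

Lemma circ_step {x U : {set E}} {e} : is_circuit N x -> x \subset U -> e \in x ->
  (r U <= r (U :\ e))%N.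
Proof.
move=> hc hxU he; have := rk_submod (U :\ e) x.
have -> : (U :\ e) :|: x = U.
  apply/setP => y; rewrite !inE; have hy := subsetP hxU y.
  case: (eqVneq y e) => [->|hne] /=; first by rewrite he (subsetP hxU e he).
  by case hyx: (y \in x); [rewrite (hy hyx)|rewrite orbF].
have -> : (U :\ e) :&: x = x :\ e.
  apply/setP => y; rewrite !inE; have hy := subsetP hxU y.
  by case hyx: (y \in x); [rewrite (hy hyx) !andbT|rewrite !andbF].
rewrite (circ_rkD hc he); have := circ_rk hc; lia.
Qed.

End Mat.

Lemma card_split (T : finType) (A B : {set T}) : B \subset A -> #|A| = (#|B| + #|A :\: B|)%N.
Proof. move=> h; have hle := subset_leq_card h; rewrite cardsD (setIidPr h); lia. Qed.

Section Base.
Variable d : nat.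
Local Notation E := ('I_d).
Variables (X N : {set {set E}}).
Hypothesis HXN : is_X_matroid X N.
Local Notation r := (mrank N).

Let HN : is_matroid N := proj1 HXN.
Lemma circX {x} : x \in X -> is_circuit N x. Proof. exact: (proj2 HXN). Qed.

Lemma base_null s : proper_seq X s -> forall k, (k <= size s)%N ->
  (k + r (\bigcup_(j < k) nth set0 s j) <= #|\bigcup_(j < k) nth set0 s j|)%N.
Proof.
case=> hX hP; elim=> [|k IH] hk.
  by rewrite big_ord0 add0n rk_card.
have {IH} IH := IH (ltnW hk).
rewrite big_ord_recr /=.
set U := \bigcup_(j < k) nth set0 s j in IH *.
set x := nth set0 s k.
have hc : is_circuit N x := circX (hX k hk).
have hnsub : ~~ (x \subset U).
  case: (posnP k) => [k0|kpos]; last exact: hP k kpos hk.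
  rewrite /U k0 big_ord0 subset0; have HH := circ_ne0 HN hc; exact HH.
case/subsetPn: hnsub => e hex heU.
have hstep := circ_step HN hc (subsetUr U x) hex.
have hsub : U \subset (U :|: x) :\ e.
  apply/subsetP => y hy; rewrite !inE hy andbT.
  by apply: contraNneq heU => <-.
have hd := rk_diff HN hsub.
have hc1 := cardsD1 e (U :|: x).
rewrite inE hex orbT add1n in hc1.
have hc2 := card_split hsub.
rewrite hc1 hc2; lia.
Qed.

Lemma rk_le_val F s : proper_seq X s -> (r F)%:Z <= val_seq F s.
Proof.
move=> hs; have := base_null hs (leqnn _).
rewrite /val_seq (big_nth set0) big_mkord.
set U := \bigcup_(j < size s) nth set0 s j.
have h1 := rk_mono HN (subsetUl F U).
have h2 := rk_diff HN (subsetUr F U).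
have h3 := card_split (subsetUr F U).
lia.
Qed.

Lemma step_ok f g : refine_step X f g ->
  (forall A, (r A)%:Z <= f A) -> (forall A, (r A)%:Z <= g A).
Proof.
move=> [[A [B [x [[hx hABx hgt] ->]]]] | [[_ [A [B [[hp hgt] ->]]]] |
   [[_ [_ [A [B [[hp hgt] ->]]]]] | [_ [_ [_ ->]]]]]] H T //;
  rewrite /upd; case: eqP => [->|_] //.
- have hs := rk_submod HN A B; have hA := H A; have hB := H B.
  have hc := circX hx.
  have hm : Num.min (#|A :&: B|%:Z) (#|x|%:Z - 1) <= (r (A :&: B))%:Z.
    rewrite ge_min; case: (eqVneq (A :&: B) x) => [e|ne].
      apply/orP; right; rewrite e.
      have := circ_rk1 HN hc; have : (0 < #|x|)%N by rewrite card_gt0 (circ_ne0 HN hc).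
      lia.
    apply/orP; left; rewrite rk_indep //; apply: (proj2 hc).
    by rewrite properEneq ne hABx.
  move: hm; generalize (Num.min (#|A :&: B|%:Z) (#|x|%:Z - 1)) => m hm.
  lia.
- have := rk_mono HN (proper_sub hp); have := H B; lia.
- have := rk_diff HN (proper_sub hp); have := H B; lia.
Qed.

End Base.

Lemma step_dec d (X : {set {set 'I_d}}) f g : refine_step X f g -> forall T, g T <= f T.
Proof.
move=> [[A [B [x [[hx hABx hgt] ->]]]] | [[_ [A [B [[hp hgt] ->]]]] |
   [[_ [_ [A [B [[hp hgt] ->]]]]] | [_ [_ [_ ->]]]]]] T //;
  rewrite /upd; case: eqP => [->|_] //; exact: ltW.
Qed.

Section Sub.
Variable d : nat.
Local Notation E := ('I_d).
Variable v : {set E} -> int.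
Hypothesis h0 : v set0 = 0.
Hypothesis hmono : forall A B : {set E}, A \subset B -> v A <= v B.
Hypothesis hunit : forall A B : {set E}, B \subset A -> v A <= v B + (#|A :\: B|)%:Z.
Hypothesis hsub : submodular v.

Definition MM := [set I : {set E} | v I == #|I|%:Z].

Lemma v_card (A : {set E}) : v A <= #|A|%:Z.
Proof. by have := hunit (sub0set A); rewrite h0 setD0 add0r. Qed.

Lemma v_ge0 (A : {set E}) : 0 <= v A.
Proof. by rewrite -h0; apply: hmono; apply: sub0set. Qed.

Lemma v_basis (A : {set E}) : exists I : {set E}, [/\ I \subset A, v I = #|I|%:Z & v I = v A].
Proof.
move Hn: #|A| => n; elim: n A Hn => [|n IH] A Hn.
  exists set0; rewrite (cards0_eq Hn) cards0 h0; split => //; exact: sub0set.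
have : (0 < #|A|)%N by rewrite Hn.
rewrite card_gt0 => /set0Pn [e he].
set A' := A :\ e.
have hA'n : #|A'| = n by have := cardsD1 e A; rewrite he Hn add1n => -[].
case: (IH A' hA'n) => I' [i1 i2 i3].
have hA'A : A' \subset A by apply: subsetDl.
have hs := card_split hA'A; rewrite Hn hA'n in hs.
have hu := hunit hA'A; have hm := hmono hA'A.
case: (eqVneq (v A) (v A')) => [eqA|neA].
  exists I'; split => //; [exact: subset_trans hA'A | by rewrite i3].
have heI' : e \notin I'.
  by apply/negP => /(subsetP i1); rewrite !inE eqxx.
have hU : (e |: I') :|: A' = A.
  apply/setP => y; rewrite !inE; case: (eqVneq y e) => [->|ne] /=; first by rewrite he.
  have := subsetP i1 y; rewrite !inE ne /=.
  by case: (y \in I') => [->//|_].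
have hI : (e |: I') :&: A' = I'.
  apply/setP => y; rewrite !inE; case: (eqVneq y e) => [->|ne] /=.
    by rewrite (negbTE heI').
  have := subsetP i1 y; rewrite !inE ne /=.
  by case: (y \in I') => [->//|_].
have hsm := hsub (e |: I') A'; rewrite hU hI in hsm.
have hc := cardsU1 e I'; rewrite heI' add1n in hc.
have hv := v_card (e |: I').
exists (e |: I'); split.
- by rewrite subUset sub1set he (subset_trans i1 hA'A).
- rewrite hc; rewrite hc in hv; lia.
- rewrite hc in hv; lia.
Qed.

Lemma MM_rank (A : {set E}) : v A = (mrank MM A)%:Z.
Proof.
case: (v_basis A) => I [h1 h2 h3].
have hge : (#|I| <= mrank MM A)%N.
  by apply: leq_bigmax_cond; rewrite inE h2 eqxx h1.
have hle : (mrank MM A <= #|I|)%N.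
  apply/bigmax_leqP => J /andP[]; rewrite inE => /eqP hJ hJA.
  have := hmono hJA; rewrite hJ -h3 h2 => hh.
  by rewrite -lez_nat.
by rewrite -h3 h2; congr Posz; apply/eqP; rewrite eqn_leq hge hle.
Qed.

Lemma v_grow (I T : {set E}) : (forall e, e \in T -> v (e |: I) = v I) -> v (I :|: T) = v I.
Proof.
move Hn: #|T| => n; elim: n T Hn => [|n IH] T Hn hT.
  by rewrite (cards0_eq Hn) setU0.
have : (0 < #|T|)%N by rewrite Hn.
rewrite card_gt0 => /set0Pn [e he].
set T' := T :\ e.
have hT'n : #|T'| = n by have := cardsD1 e T; rewrite he Hn add1n => -[].
have hT' : v (I :|: T') = v I.
  by apply: IH => // f; rewrite inE => /andP[_]; apply: hT.
set S := I :|: T' in hT'.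
case heS: (e \in S).
  suff -> : I :|: T = S by [].
  apply/setP => y; rewrite /S !inE; case: (eqVneq y e) => [->|ne] /=.
    by rewrite he orbT; move: heS; rewrite /S !inE eqxx.
  by [].
have hU : S :|: (e |: I) = I :|: T.
  apply/setP => y; rewrite /S !inE; case: (eqVneq y e) => [->|ne] /=.
    by rewrite he !orbT.
  by case: (y \in I); case: (y \in T).
have hI : S :&: (e |: I) = I.
  apply/setP => y; rewrite /S !inE; case: (eqVneq y e) => [->|ne] /=.
    by move: heS; rewrite /S !inE eqxx /= => /negbT; rewrite negb_or => /andP[/negbTE-> _].
  by case: (y \in I); case: (y \in T).
have hsm := hsub S (e |: I); rewrite hU hI hT' (hT e he) in hsm.
have := hmono (subsetUl I T); lia.
Qed.

Lemma MM_matroid : is_matroid MM.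
Proof.
split.
- by rewrite inE h0 cards0.
- move=> I J; rewrite !inE => /eqP hJ hIJ.
  have := hunit hIJ; have := card_split hIJ; have := v_card I.
  rewrite hJ => a b c; apply/eqP; lia.
- move=> I J; rewrite !inE => /eqP hI /eqP hJ hlt.
  case: (boolP [exists e in J :\: I, e |: I \in MM]) => [/exists_inP [e h1 h2]|hne].
    by exists e.
  exfalso.
  have hall : forall e, e \in J -> v (e |: I) = v I.
    move=> e heJ; case heI: (e \in I).
      by congr v; apply/setP => y; rewrite !inE; case: eqVneq => [->|] //=.
    have hn : e |: I \notin MM.
      apply/negP => H; move/exists_inP: hne; apply; exists e => //.
      by rewrite inE heI heJ.
    rewrite inE cardsU1 heI add1n in hn.
    have := v_card (e |: I); rewrite cardsU1 heI add1n.
    have := hmono (subsetUr [set e] I).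
    move/eqP: hn; lia.
  have := v_grow hall; have := hmono (subsetUr I J); lia.
Qed.

End Sub.

Unset Implicit Arguments.

Theorem mainTheorem17 (d : nat) (X : {set {set 'I_d}})
  (vals : nat -> {set 'I_d} -> int) (n : nat) :
  (exists M, is_X_matroid X M) ->
  is_val_X X (vals 0%N) ->
  (forall m, refine_step X (vals m) (vals m.+1)) ->
  stationary X (vals n) ->
  submodular (vals n) ->
  exists M : {set {set 'I_d}},
    [/\ is_X_matroid X M,
        (forall A, vals n A = (mrank M A)%:Z),
        (forall N, is_X_matroid X N -> dep_le M N) &
        (forall N, is_X_matroid X N ->
           (forall N', is_X_matroid X N' -> dep_le N' N -> dep_le N N') ->
           N = M)].
Proof.
move=> [N0 hN0] hval hstep [hi [hii hiii]] hsubm.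
have chain : forall m T, vals m T <= vals 0%N T.
  elim=> [|m IH] T //; exact: le_trans (step_dec (hstep m) T) (IH T).
have lower : forall N, is_X_matroid X N -> forall m A, (mrank N A)%:Z <= vals m A.
  move=> N hN; elim=> [|m IH] A.
    case: (proj1 (hval A)) => s hs ->; exact: (rk_le_val hN).
  exact: (step_ok hN (hstep m) IH A).
have v0 : vals 0%N set0 <= 0.
  have hs : proper_seq X [::] by split => i.
  have := proj2 (hval set0) [::] hs; rewrite /val_seq big_nil setU0 cards0.
  done.
have h0 : vals n set0 = 0.
  have := chain n set0; have := lower N0 hN0 n set0; lia.
have hmono : forall A B : {set 'I_d}, A \subset B -> vals n A <= vals n B.
  move=> A B hAB; case: (eqVneq A B) => [->//|ne].
  rewrite leNgt; apply/negP => hlt; apply: (hii A B); split => //.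
  by rewrite properEneq ne hAB.
have hunit : forall A B : {set 'I_d}, B \subset A -> vals n A <= vals n B + (#|A :\: B|)%:Z.
  move=> A B hBA; case: (eqVneq B A) => [->|ne].
    by rewrite setDv cards0 addr0.
  rewrite leNgt; apply/negP => hlt; apply: (hiii A B); split => //.
  by rewrite properEneq ne hBA.
set v := vals n in h0 hmono hunit hsubm lower chain *.
have indepN : forall N (I : {set 'I_d}), is_X_matroid X N -> I \in N -> I \in MM v.
  move=> N I hN hI; rewrite inE; apply/eqP.
  have := lower N hN n I; rewrite (rk_indep hI).
  have := v_card h0 hunit I; rewrite /v; lia.
have minM : forall N, is_X_matroid X N -> dep_le (MM v) N.
  move=> N hN A; apply: contraNN; exact: indepN.
have hXM : is_X_matroid X (MM v).
  split; first exact: MM_matroid.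
  move=> x hx; split.
    have hs : proper_seq X [:: x].
      split; first by case=> [|[]].
      by move=> [|[]].
    have := proj2 (hval x) [:: x] hs.
    rewrite /val_seq big_cons big_nil setU0 setUid /= => hle.
    rewrite inE; apply/negP => /eqP hvx; have := chain n x.
    rewrite /v in hvx; rewrite -hvx in hle; lia.
  move=> D hD; apply: (indepN N0) => //.
  exact: (proj2 (proj2 hN0 x hx)).
exists (MM v); split => //.
- exact: MM_rank.
- move=> N hN hmin.
  have h1 := minM N hN.
  have h2 := hmin (MM v) hXM h1.
  apply/setP => A; apply/idP/idP.
    by apply: contraTT; exact: h1 A.
  by apply: contraTT; exact: h2 A.
Qed.
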